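(* Let $r>0$, $\varepsilon_0>0$, let $n\ge 0$ be an integer, and let $\varphi_0$ be an axially symmetric external potential, harmonic inside the ball of radius $r$ centered at the origin, whose values on the axis are a polynomial of degree $n$: \[ -\varphi_0(s)=\sum_{i=1}^{n+1} b_i s^{i-1}, \] and set $b_i=0$ for $i>n+1$. Let $\sigma$ be the polynomial of degree at most $n$ on $[-r,r]$ satisfying \[ \int_{-r}^{r}\frac{r\,\sigma(z)}{\sqrt{s^2+r^2-2sz}}\,dz=-2\varepsilon_0\,\varphi_0(s)\qquad(-r<s<r). \] Then for every integer $m\ge 0$ the dipole moment of order $m$, $\mathcal D_m=2\pi r\int_{-r}^{r}z^m\sigma(z)\,dz$, equals \[ \mathcal D_m=2\pi\varepsilon_0\, r^{m+1}\sum_{\substack{i=\delta\\ i\equiv \delta\ (\mathrm{mod}\ 2)}}^{m+1}(2i-1)\,r^{i-1}F_{i,m+1}\,b_i , \] where $\delta=1$ if $m$ is even and $\delta=2$ if $m$ is odd (the sum runs over $i=\delta,\delta+2,\dots$ up to $m+1$), and $F_{ij}=\int_{-1}^{1}P_{i-1}(\eta)\,\eta^{j-1}\,d\eta$ with $P_k$ the Legendre polynomial of degree $k$.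
   Context: Physical setting: a grounded conducting ball of radius $r$ centered at the origin on the axis of an axially symmetric external field with potential $\varphi_0$ ($\varphi_0(s)$ denotes its value at axial coordinate $s$); $\varepsilon_0$ is the electric constant; $\sigma(z)$ is the induced surface charge density as a function of the axial coordinate $z$, and the integral equation expresses cancellation of the external potential inside the ball. *)

(* Defs.v *)
From Stdlib Require Import Reals.
From Coquelicot Require Import Coquelicot.
Open Scope R_scope.

(* Legendre polynomials via Bonnet's recurrence:
   P_0 = 1, P_1 = x, (k+2) P_{k+2} = (2k+3) x P_{k+1} - (k+1) P_k. *)
Fixpoint legendre_pair (k : nat) (x : R) : R * R :=
  match k with
  | O => (1, x)
  | S k' =>
      let (p, q) := legendre_pair k' x in
      (q, ((2 * INR k' + 3) * x * q - (INR k' + 1) * p) / (INR k' + 2))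
  end.

Definition legendre (k : nat) (x : R) : R := fst (legendre_pair k x).

Definition Fcoef (i j : nat) : R :=
  RInt (fun eta => legendre (i - 1) eta * eta ^ (j - 1)) (-1) 1.

(* sum of f i over i = d, d+2, d+4, ..., up to (at most) top *)
Definition step2_sum (d top : nat) (f : nat -> R) : R :=
  sum_f_R0 (fun k => f (d + 2 * k)%nat) ((top - d) / 2).

Definition dipole (r : R) (sigma : R -> R) (m : nat) : R :=
  2 * PI * r * RInt (fun z => z ^ m * sigma z) (-r) r.

Definition delta (m : nat) : nat := if Nat.even m then 1%nat else 2%nat.

(* Main.v *)
Require Import Defs.
From Stdlib Require Import Reals Lra Lia.
From Coquelicot Require Import Coquelicot.
Open Scope R_scope.

Lemma nat_ind2 (Q : nat -> Prop) : Q 0%nat -> Q 1%nat ->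
  (forall k, Q k -> Q (S k) -> Q (S (S k))) -> forall k, Q k.
Proof.
  intros H0 H1 HS k. assert (Q k /\ Q (S k)) by (induction k; [split; auto| destruct IHk; split; auto]).
  tauto.
Qed.

Lemma leg_snd k x : snd (legendre_pair k x) = legendre (S k) x.
Proof. unfold legendre; simpl; destruct (legendre_pair k x); reflexivity. Qed.

Lemma leg0 x : legendre 0 x = 1. Proof. reflexivity. Qed.
Lemma leg1 x : legendre 1 x = x. Proof. reflexivity. Qed.

Lemma leg_SS k x : legendre (S (S k)) x =
  ((2 * INR k + 3) * x * legendre (S k) x - (INR k + 1) * legendre k x) / (INR k + 2).
Proof.
  rewrite <- leg_snd. simpl. rewrite <- (leg_snd k x).
  unfold legendre. destruct (legendre_pair k x); reflexivity.
Qed.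

Lemma leg_rec k x : INR (S k) * legendre (S k) x =
  (2 * INR k + 1) * x * legendre k x - INR k * legendre (pred k) x.
Proof.
  destruct k. simpl. rewrite leg1, leg0. ring.
  rewrite leg_SS. simpl pred. rewrite !S_INR.
  assert (0 <= INR k) by apply pos_INR. field. lra.
Qed.

Lemma D_mult f g x a b : is_derive f x a -> is_derive g x b ->
  is_derive (fun y => f y * g y) x (a * g x + f x * b).
Proof. intros. apply (is_derive_mult f g x a b); auto. intros; apply Rmult_comm. Qed.
Lemma D_plus f g x a b : is_derive f x a -> is_derive g x b ->
  is_derive (fun y => f y + g y) x (a + b).
Proof. intros. apply (is_derive_plus f g x a b); auto. Qed.
Lemma D_minus f g x a b : is_derive f x a -> is_derive g x b ->
  is_derive (fun y => f y - g y) x (a - b).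
Proof. intros. apply (is_derive_minus f g x a b); auto. Qed.
Lemma D_id x : is_derive (fun y : R => y) x 1.
Proof. apply (is_derive_id (K:=R_AbsRing)). Qed.
Lemma D_const (c x : R) : @is_derive R_AbsRing R_NormedModule (fun _ : R => c) x 0.
Proof. apply (is_derive_const c x). Qed.
Lemma D_eq (f : R -> R) (x a b : R) : is_derive f x a -> a = b -> is_derive f x b.
Proof. intros H ->; auto. Qed.
Lemma D_ext (f g : R -> R) (x a : R) : (forall y, f y = g y) -> is_derive f x a -> is_derive g x a.
Proof. intros; eapply is_derive_ext; eauto. Qed.

Fixpoint dleg (k : nat) (x : R) : R :=
  match k with
  | O => 0
  | S O => 1
  | S (S k') => (2 * INR k' + 3) * legendre (S k') x + dleg k' x
  end.

Lemma dleg_b k x : x * dleg (S k) x - dleg k x = INR (S k) * legendre (S k) x.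
Proof.
  revert k. apply nat_ind2.
  - simpl. rewrite leg1. ring.
  - change (dleg 2 x) with ((2*INR 0+3)*legendre 1 x + dleg 0 x).
    rewrite leg_SS, leg1, leg0. simpl INR. simpl dleg. field.
  - intros k IH _. change (dleg (S (S (S k))) x) with ((2 * INR (S k) + 3) * legendre (S (S k)) x + dleg (S k) x).
    change (dleg (S (S k)) x) with ((2 * INR k + 3) * legendre (S k) x + dleg k x).
    rewrite (leg_rec (S (S k))). simpl pred. rewrite !S_INR in *.
    replace (x * ((2 * (INR k + 1) + 3) * legendre (S (S k)) x + dleg (S k) x) -
      ((2 * INR k + 3) * legendre (S k) x + dleg k x)) with
      ((2 * (INR k + 1) + 3) * x * legendre (S (S k)) x + (x * dleg (S k) x - dleg k x)
        - (2 * INR k + 3) * legendre (S k) x) by ring.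
    rewrite IH. ring.
Qed.

Lemma leg_derive k x : is_derive (legendre k) x (dleg k x).
Proof.
  revert x. induction k as [k IH] using (well_founded_induction Wf_nat.lt_wf). intro x.
  destruct k as [|[|k]].
  - apply (D_ext (fun _ => 1)). reflexivity. apply D_const.
  - apply (D_ext (fun y => y)). reflexivity. apply D_id.
  - eapply D_ext. intro y. symmetry. apply leg_SS.
    eapply D_eq.
    + apply (D_mult (fun y => (2 * INR k + 3) * y * legendre (S k) y - (INR k + 1) * legendre k y)
             (fun _ => / (INR k + 2))).
      apply D_minus. apply D_mult. apply D_mult. apply D_const. apply D_id. apply IH; lia.
      apply D_mult. apply D_const. apply IH; lia. apply D_const.
    + assert (H := dleg_b k x).
      change (dleg (S (S k)) x) with ((2 * INR k + 3) * legendre (S k) x + dleg k x). rewrite S_INR in H.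
      assert (0 <= INR k) by apply pos_INR.
      assert (E : x * dleg (S k) x = (INR k + 1) * legendre (S k) x + dleg k x) by lra.
      cbv beta. rewrite Rmult_0_r, Rplus_0_r.
      replace ((2*INR k+3)*x*dleg (S k) x) with ((2*INR k+3)*(x*dleg (S k) x)) by ring.
      rewrite E. field. lra.
Qed.

Definition Cont (f : R -> R) := forall x, @continuous R_UniformSpace R_UniformSpace f x.

Lemma C_ext (f g : R -> R) : (forall y, f y = g y) -> Cont f -> Cont g.
Proof. intros E H x. eapply continuous_ext; eauto. Qed.
Lemma C_const c : Cont (fun _ => c).
Proof. intro x. apply continuous_const. Qed.
Lemma C_id : Cont (fun y => y).
Proof. intro x. apply continuous_id. Qed.
Lemma C_plus f g : Cont f -> Cont g -> Cont (fun y => f y + g y).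
Proof. intros Hf Hg x. apply (continuous_plus f g x (Hf x) (Hg x)). Qed.
Lemma C_mult f g : Cont f -> Cont g -> Cont (fun y => f y * g y).
Proof. intros Hf Hg x. apply (continuous_mult f g x (Hf x) (Hg x)). Qed.
Lemma C_opp f : Cont f -> Cont (fun y => - f y).
Proof. intros Hf x. apply (continuous_opp f x (Hf x)). Qed.
Lemma C_minus f g : Cont f -> Cont g -> Cont (fun y => f y - g y).
Proof. intros. apply C_plus; auto. apply C_opp; auto. Qed.
Lemma C_pow n : Cont (fun y => y ^ n).
Proof. induction n. apply (C_ext (fun _ => 1)); [reflexivity|apply C_const]. apply (C_ext (fun y => y * y ^ n)); [reflexivity|]. apply C_mult; auto. apply C_id. Qed.
Lemma C_leg k : Cont (legendre k).
Proof. intro x. apply (@ex_derive_continuous R_AbsRing R_NormedModule). eexists; apply leg_derive. Qed.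
Lemma C_dleg k : Cont (dleg k).
Proof.
  revert k. apply nat_ind2. apply C_const. apply C_const.
  intros k H _. eapply C_ext. intro y. reflexivity.
  apply C_plus; auto. apply C_mult. apply C_const. apply C_leg.
Qed.
Lemma C_sum (F : nat -> R -> R) N : (forall k, Cont (F k)) -> Cont (fun y => sum_f_R0 (fun k => F k y) N).
Proof. intros H. induction N. apply H. simpl. apply C_plus; auto. Qed.

Ltac cont := repeat first [ apply C_plus | apply C_minus | apply C_mult | apply C_opp | apply C_const
  | apply C_id | apply C_pow | apply C_leg | apply C_dleg | apply C_sum; intro ].

Lemma Cont_ex f a b : Cont f -> ex_RInt f a b.
Proof. intros H. apply (@ex_RInt_continuous R_CompleteNormedModule). intros; apply H. Qed.

Lemma leg_1 k : legendre k 1 = 1.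
Proof. revert k; apply nat_ind2; auto. intros k H1 H2. rewrite leg_SS, H1, H2.
  assert (0 <= INR k) by apply pos_INR. field. lra. Qed.
Lemma leg_m1 k : legendre k (-1) = (-1)^k.
Proof. revert k; apply nat_ind2; auto. simpl. rewrite leg1; ring. intros k H1 H2. rewrite leg_SS, H1, H2.
  assert (0 <= INR k) by apply pos_INR. simpl. field. lra. Qed.
Lemma leg_opp k x : legendre k (-x) = (-1)^k * legendre k x.
Proof. revert k; apply nat_ind2. rewrite !leg0; ring. rewrite !leg1; ring.
  intros k H1 H2. rewrite !leg_SS, H1, H2. simpl. field.
  assert (0 <= INR k) by apply pos_INR. lra. Qed.
Lemma leg_bound k x : -1 <= x <= 1 -> Rabs (legendre k x) <= 3 ^ k.
Proof.
  intros Hx. revert k; apply nat_ind2.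
  - rewrite leg0, Rabs_R1. simpl; lra.
  - rewrite leg1. simpl. apply Rabs_le; lra.
  - intros k H1 H2. rewrite leg_SS. assert (0 <= INR k) by apply pos_INR.
    unfold Rdiv. rewrite Rabs_mult, Rabs_inv, (Rabs_right (INR k + 2)) by lra.
    apply (Rmult_le_reg_r (INR k + 2)); [lra|]. rewrite Rmult_assoc, Rinv_l, Rmult_1_r by lra.
    eapply Rle_trans. apply Rabs_triang. rewrite Rabs_Ropp, !Rabs_mult.
    rewrite (Rabs_right (2 * INR k + 3)), (Rabs_right (INR k + 1)) by lra.
    assert (Rabs x <= 1) by (apply Rabs_le; lra).
    assert (0 <= 3 ^ k) by (apply pow_le; lra).
    assert (0 <= Rabs (legendre (S k) x)) by apply Rabs_pos.
    assert (0 <= Rabs (legendre k x)) by apply Rabs_pos.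
    assert (Rabs x * Rabs (legendre (S k) x) <= 3 ^ S k).
    { replace (3 ^ S k) with (1 * 3 ^ S k) by ring. apply Rmult_le_compat; auto; apply Rabs_pos. }
    simpl in *. nra.
Qed.

Lemma I_plus (f g : R -> R) (a b u v : R) : is_RInt f a b u -> is_RInt g a b v -> is_RInt (fun y => f y + g y) a b (u + v).
Proof. intros. apply (@is_RInt_plus R_NormedModule f g a b u v); auto. Qed.
Lemma I_minus (f g : R -> R) (a b u v : R) : is_RInt f a b u -> is_RInt g a b v -> is_RInt (fun y => f y - g y) a b (u - v).
Proof. intros. apply (@is_RInt_minus R_NormedModule f g a b u v); auto. Qed.
Lemma I_scal (f : R -> R) (a b c u : R) : is_RInt f a b u -> is_RInt (fun y => c * f y) a b (c * u).
Proof. intros. apply (@is_RInt_scal R_NormedModule f a b c u); auto. Qed.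
Lemma I_ext (f g : R -> R) (a b u : R) : (forall y, f y = g y) -> is_RInt f a b u -> is_RInt g a b u.
Proof. intros E H. apply (@is_RInt_ext R_NormedModule f g); auto. Qed.
Lemma I_eq (f : R -> R) (a b u v : R) : is_RInt f a b u -> u = v -> is_RInt f a b v.
Proof. intros H ->; auto. Qed.
Lemma I_zero (a b : R) : is_RInt (fun _ => 0) a b 0.
Proof. eapply I_eq. apply (@is_RInt_const R_NormedModule). simpl. unfold scal; simpl. unfold mult; simpl. ring. Qed.
Lemma I_sum (F : nat -> R -> R) a b (v : nat -> R) N :
  (forall k, (k <= N)%nat -> is_RInt (F k) a b (v k)) ->
  is_RInt (fun y => sum_f_R0 (fun k => F k y) N) a b (sum_f_R0 v N).
Proof. induction N; intros H. simpl. apply H; lia. simpl. apply I_plus. apply IHN; intros; apply H; lia. apply H; lia. Qed.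
Lemma I_cont (f : R -> R) (a b : R) : Cont f -> is_RInt f a b (RInt f a b).
Proof. intros H. apply (@RInt_correct R_CompleteNormedModule). apply Cont_ex; auto. Qed.
Lemma I_uniq (f : R -> R) (a b u : R) : is_RInt f a b u -> RInt f a b = u.
Proof. intros. apply (@is_RInt_unique R_CompleteNormedModule); auto. Qed.

Lemma orth_mono j : forall k, (j < k)%nat -> is_RInt (fun x => legendre k x * x ^ j) (-1) 1 0.
Proof.
  induction j as [j IH] using (well_founded_induction Wf_nat.lt_wf).
  intros k Hk. destruct k as [|k']; [lia|].
  set (G := fun x => (legendre (S (S k')) x - legendre k' x) * x ^ j).
  set (dG := fun x => ((dleg (S (S k')) x - dleg k' x) * x ^ j +
     (legendre (S (S k')) x - legendre k' x) * (INR j * 1 * x ^ pred j))).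
  assert (HG : is_RInt dG (-1) 1 (G 1 - G (-1))).
  { apply (@is_RInt_derive R_CompleteNormedModule G dG).
    - intros x _. unfold G, dG. apply (D_mult (fun x => legendre (S (S k')) x - legendre k' x) (fun x => x ^ j)).
      apply (D_minus (legendre (S (S k'))) (legendre k')); apply leg_derive.
      apply (is_derive_pow (fun y => y) j x 1). apply D_id.
    - intros x _. unfold dG. cont. }
  assert (G1 : G 1 - G (-1) = 0).
  { unfold G. rewrite !leg_1, !leg_m1. simpl. ring. }
  rewrite G1 in HG.
  assert (Hrest : is_RInt (fun x => (legendre (S (S k')) x - legendre k' x) * (INR j * 1 * x ^ pred j)) (-1) 1 0).
  { destruct j as [|j'].
    - eapply I_ext; [|apply I_zero]. intro y. simpl. ring.
    - eapply I_ext. 2:{ eapply I_eq. apply (I_scal (fun x => legendre (S (S k')) x * x ^ j' - legendre k' x * x ^ j') _ _ (INR (S j'))).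
        apply (I_minus (fun x => legendre (S (S k')) x * x ^ j') (fun x => legendre k' x * x ^ j')); apply IH; lia. ring. }
      intro y. simpl pred. cbv beta. ring. }
  assert (H2 : is_RInt (fun x => (2 * INR k' + 3) * (legendre (S k') x * x ^ j)) (-1) 1 0).
  { eapply I_ext. 2:{ eapply I_eq. apply (I_minus _ _ _ _ _ _ HG Hrest). ring. }
    intro y. unfold dG. simpl dleg. cbv beta. ring. }
  assert (0 <= INR k') by apply pos_INR.
  eapply I_ext. 2:{ eapply I_eq. apply (I_scal _ _ _ (/ (2 * INR k' + 3)) _ H2). ring. }
  intro y. cbv beta. field. lra.
Qed.

Definition span (B : nat -> R -> R) (d : nat) (f : R -> R) :=
  exists c : nat -> R, forall x, f x = sum_f_R0 (fun k => c k * B k x) d.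

Lemma span_ext B d (f g : R -> R) : (forall x, f x = g x) -> span B d f -> span B d g.
Proof. intros E [c Hc]. exists c. intro x. rewrite <- E. auto. Qed.
Lemma span_S B d f : span B d f -> span B (S d) f.
Proof.
  intros [c Hc]. exists (fun j => if Compare_dec.le_lt_dec j d then c j else 0). intro x.
  rewrite tech5. destruct (Compare_dec.le_lt_dec (S d) d); [lia|]. rewrite Rmult_0_l, Rplus_0_r, Hc.
  apply sum_eq. intros i Hi. destruct (Compare_dec.le_lt_dec i d); [auto|lia].
Qed.
Lemma span_le B d d' f : (d <= d')%nat -> span B d f -> span B d' f.
Proof. intros H. induction H; auto. intros; apply span_S; auto. Qed.
Lemma span_plus B d f g : span B d f -> span B d g -> span B d (fun x => f x + g x).
Proof. intros [c Hc] [e He]. exists (fun k => c k + e k). intro x. rewrite Hc, He, <- plus_sum.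
  apply sum_eq; intros; ring. Qed.
Lemma span_scal B d f a : span B d f -> span B d (fun x => a * f x).
Proof. intros [c Hc]. exists (fun k => a * c k). intro x. rewrite Hc, scal_sum.
  apply sum_eq; intros; ring. Qed.
Lemma sum_delta (a : nat -> R) j N : (j <= N)%nat ->
  sum_f_R0 (fun k => if Nat.eq_dec k j then a k else 0) N = a j.
Proof.
  induction N; intros H. simpl. destruct (Nat.eq_dec 0 j); [subst; auto|lia].
  rewrite tech5. destruct (Nat.eq_dec (S N) j).
  - subst. rewrite (sum_eq _ (fun _ => 0)). rewrite sum_cte. ring.
    intros i Hi. destruct (Nat.eq_dec i (S N)); [lia|auto].
  - rewrite IHN; [ring|lia].
Qed.
Lemma span_single B d k : (k <= d)%nat -> span B d (B k).
Proof. intros H. exists (fun j => if Nat.eq_dec j k then 1 else 0). intro x.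
  rewrite (sum_eq _ (fun j => if Nat.eq_dec j k then B j x else 0)).
  rewrite sum_delta; auto. intros i _. destruct (Nat.eq_dec i k); ring. Qed.

Definition mono (j : nat) (x : R) := x ^ j.

Lemma span_mono_x d f : span mono d f -> span mono (S d) (fun x => x * f x).
Proof.
  intros [c Hc]. exists (fun j => match j with O => 0 | S j => c j end). intro x.
  rewrite decomp_sum by lia. simpl pred. rewrite Hc, scal_sum. unfold mono.
  rewrite Rmult_0_l, Rplus_0_l. apply sum_eq. intros; simpl; ring.
Qed.

Lemma poly_leg k : span mono k (legendre k).
Proof.
  revert k. apply nat_ind2.
  - exists (fun _ => 1). intro x. simpl. unfold mono. rewrite leg0. ring.
  - exists (fun j => match j with O => 0 | _ => 1 end). intro x. simpl. unfold mono. rewrite leg1. ring.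
  - intros k H1 H2. eapply span_ext. intro x. symmetry. apply leg_SS.
    eapply span_ext. intro x. unfold Rdiv. rewrite Rmult_comm. reflexivity.
    apply span_scal. eapply span_ext. intro x.
    replace ((2 * INR k + 3) * x * legendre (S k) x - (INR k + 1) * legendre k x) with
      ((2 * INR k + 3) * (x * legendre (S k) x) + (- (INR k + 1)) * legendre k x) by ring.
    reflexivity.
    apply span_plus. apply span_scal. apply span_mono_x; auto.
    apply span_scal. apply (span_le _ k); auto.
Qed.

Lemma orth_poly d f k : span mono d f -> (d < k)%nat ->
  is_RInt (fun x => legendre k x * f x) (-1) 1 0.
Proof.
  intros [c Hc] Hdk.
  eapply I_ext. 2:{ eapply I_eq. apply (I_sum (fun j x => c j * (legendre k x * x ^ j)) _ _ (fun j => c j * 0) d).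
    intros j Hj. apply I_scal. apply orth_mono. lia.
    rewrite (sum_eq _ (fun _ => 0)). rewrite sum_cte; ring. intros; ring. }
  intro y. cbv beta. rewrite Hc, scal_sum. apply sum_eq. intros. unfold mono. ring.
Qed.

Lemma orth_PP j k : (j < k)%nat -> is_RInt (fun x => legendre k x * legendre j x) (-1) 1 0.
Proof. intros. apply (orth_poly j). apply poly_leg. auto. Qed.

Lemma norm_P k : is_RInt (fun x => legendre k x * legendre k x) (-1) 1 (2 / (2 * INR k + 1)).
Proof.
  induction k.
  - eapply I_ext. 2:{ eapply I_eq. apply (@is_RInt_const R_NormedModule (-1) 1 1). simpl. unfold scal; simpl; unfold mult; simpl. field. }
    intro y. cbv beta. rewrite leg0. ring.
  - assert (0 <= INR k) by apply pos_INR.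
    assert (HB : is_RInt (fun x => legendre k x * (x * legendre (S k) x)) (-1) 1
                  ((INR k + 1) / (2 * INR k + 3) * (2 / (2 * INR k + 1)))).
    { eapply I_ext. 2:{ eapply I_eq. apply (I_plus (fun x => (INR k + 2) / (2 * INR k + 3) * (legendre (S (S k)) x * legendre k x))
          (fun x => (INR k + 1) / (2 * INR k + 3) * (legendre k x * legendre k x))).
        apply (I_scal _ _ _ ((INR k + 2) / (2 * INR k + 3))). apply (orth_PP k (S (S k))). lia.
        apply (I_scal _ _ _ ((INR k + 1) / (2 * INR k + 3))). apply IHk. ring. }
      intro x. cbv beta. assert (R := leg_rec (S k) x). simpl pred in R. rewrite !S_INR in R.
      replace (x * legendre (S k) x) with (((INR k + 1 + 1) * legendre (S (S k)) x + (INR k + 1) * legendre k x) / (2 * INR k + 3)).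
      field. lra. rewrite R. field. lra. }
    assert (HO : is_RInt (fun x => legendre (S k) x * legendre (pred k) x) (-1) 1 0).
    { apply orth_PP. lia. }
    eapply I_ext. 2:{ eapply I_eq. apply (I_scal (fun x => (2 * INR k + 1) * (legendre k x * (x * legendre (S k) x)) - INR k * (legendre (S k) x * legendre (pred k) x)) _ _ (/ (INR k + 1))).
      apply (I_minus (fun x => (2 * INR k + 1) * (legendre k x * (x * legendre (S k) x))) (fun x => INR k * (legendre (S k) x * legendre (pred k) x))).
      apply (I_scal _ _ _ (2 * INR k + 1)). apply HB. apply (I_scal _ _ _ (INR k)). apply HO.
      rewrite S_INR. field. lra. }
    intro x. cbv beta. assert (R := leg_rec k x). rewrite S_INR in R.
    replace (legendre (S k) x * legendre (S k) x) with (/ (INR k + 1) * (((INR k + 1) * legendre (S k) x) * legendre (S k) x)) by (field; lra).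
    rewrite R. ring.
Qed.

Lemma span_leg_x_sum d (c : nat -> R) :
  span legendre (S d) (fun x => x * sum_f_R0 (fun k => c k * legendre k x) d).
Proof.
  induction d.
  - eapply span_ext. 2:{ apply (span_scal legendre 1 (legendre 1) (c 0%nat)). apply span_single. lia. }
    intro x. simpl. rewrite leg1, leg0. ring.
  - apply (span_ext legendre (S (S d)) (fun x => x * sum_f_R0 (fun k => c k * legendre k x) d + x * (c (S d) * legendre (S d) x))).
    intro x. rewrite tech5. ring.
    apply (span_plus legendre (S (S d)) (fun x => x * sum_f_R0 (fun k => c k * legendre k x) d)). apply span_S. auto.
    assert (0 <= INR d) by apply pos_INR.
    eapply span_ext. 2:{ apply (span_scal legendre (S (S d)) (fun x => (INR d + 2) * legendre (S (S d)) x + (INR d + 1) * legendre d x) (c (S d) / (2 * INR d + 3))).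
      apply (span_plus legendre (S (S d)) (fun x => (INR d + 2) * legendre (S (S d)) x) (fun x => (INR d + 1) * legendre d x)).
      apply (span_scal _ _ _ (INR d + 2)). apply span_single; lia.
      apply (span_scal _ _ _ (INR d + 1)). apply span_single; lia. }
    intro x. cbv beta. assert (R := leg_rec (S d) x). simpl pred in R. rewrite !S_INR in R.
    replace (x * (c (S d) * legendre (S d) x)) with (c (S d) * (((2 * (INR d + 1) + 1) * x * legendre (S d) x)) / (2 * INR d + 3)) by (field; lra).
    replace ((2 * (INR d + 1) + 1) * x * legendre (S d) x) with ((INR d + 1 + 1) * legendre (S (S d)) x + (INR d + 1) * legendre d x) by lra.
    field. lra.
Qed.

Lemma span_leg_x d f : span legendre d f -> span legendre (S d) (fun x => x * f x).
Proof. intros [c Hc]. eapply span_ext. 2: apply (span_leg_x_sum d c). intro x. rewrite Hc. auto. Qed.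

Lemma mono_leg m : span legendre m (fun x => x ^ m).
Proof.
  induction m.
  - eapply span_ext. 2: apply (span_single _ 0 0); lia. intro x. simpl. rewrite leg0; auto.
  - eapply span_ext. 2: apply span_leg_x; eauto. intro x. simpl. auto.
Qed.

Lemma Fcoef_S j m : Fcoef (S j) (S m) = RInt (fun e => legendre j e * e ^ m) (-1) 1.
Proof. unfold Fcoef. simpl. rewrite !Nat.sub_0_r. reflexivity. Qed.

Lemma expand m x : x ^ m = sum_f_R0 (fun k => (2 * INR k + 1) / 2 * Fcoef (S k) (S m) * legendre k x) m.
Proof.
  destruct (mono_leg m) as [c Hc]. rewrite Hc. apply sum_eq. intros j Hj.
  f_equal. rewrite Fcoef_S.
  assert (0 <= INR j) by apply pos_INR.
  assert (HI : is_RInt (fun e => legendre j e * e ^ m) (-1) 1 (c j * (2 / (2 * INR j + 1)))).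
  { eapply I_ext. 2:{ eapply I_eq. apply (I_sum (fun k e => c k * (legendre j e * legendre k e)) _ _
        (fun k => c k * (if Nat.eq_dec k j then 2 / (2 * INR k + 1) else 0)) m).
      intros k Hk. apply I_scal. destruct (Nat.eq_dec k j).
      - subst. apply norm_P.
      - destruct (Compare_dec.lt_eq_lt_dec k j) as [[Hl|He]|Hl]; [|lia|].
        + apply orth_PP; auto.
        + eapply I_ext. 2: apply (orth_PP j k); auto. intro y; cbv beta; ring.
      - rewrite (sum_eq _ (fun k => if Nat.eq_dec k j then c k * (2 / (2 * INR k + 1)) else 0)).
        apply sum_delta; auto. intros i _. destruct (Nat.eq_dec i j); ring. }
    intro y. cbv beta. rewrite Hc, scal_sum. apply sum_eq. intros; ring. }
  rewrite (I_uniq _ _ _ _ HI). field. lra.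
Qed.

Lemma Fcoef_odd k m : Nat.even (k + m) = false -> Fcoef (S k) (S m) = 0.
Proof.
  intros He. rewrite Fcoef_S.
  set (f := fun e => legendre k e * e ^ m).
  assert (Hodd : forall e, f (- e) = - f e).
  { intro e. unfold f. rewrite leg_opp.
    assert (exists p, (k + m = S (2 * p))%nat) as [p Hp].
    { destruct (Nat.Even_or_Odd (k + m)) as [[p Hp]|[p Hp]].
      - subst. rewrite Hp, Nat.even_mul in He. simpl in He. discriminate.
      - exists p. lia. }
    replace (-e) with ((-1) * e) by ring. rewrite Rpow_mult_distr.
    replace ((-1) ^ k * legendre k e * ((-1) ^ m * e ^ m)) with ((-1) ^ (k + m) * (legendre k e * e ^ m)).
    rewrite Hp, pow_1_odd. ring. rewrite pow_add. ring. }
  assert (Hc : Cont f) by (unfold f; cont).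
  assert (H1 : is_RInt f (-1) 1 (RInt f 1 (-1))).
  { eapply I_ext. 2:{ apply (@is_RInt_comp_opp R_NormedModule f (-1) 1).
      replace (- -1) with 1 by ring. apply I_cont; auto. }
    intro y. cbv beta. unfold opp; simpl. rewrite Hodd. ring. }
  assert (H2 : RInt f 1 (-1) = - RInt f (-1) 1).
  { rewrite <- (@opp_RInt_swap R_CompleteNormedModule). reflexivity. apply Cont_ex; auto. }
  pose proof (I_uniq _ _ _ _ H1). lra.
Qed.

Definition SN (N : nat) (t x : R) := sum_f_R0 (fun k => legendre k x * t ^ k) N.
Definition dSN (N : nat) (t x : R) := sum_f_R0 (fun k => legendre k x * (INR k * 1 * t ^ pred k)) N.

Lemma SN_derive N x t : is_derive (fun t => SN N t x) t (dSN N t x).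
Proof.
  unfold SN, dSN. induction N.
  - simpl. eapply D_eq. apply (D_mult (fun _ => legendre 0 x) (fun t => t ^ 0)). apply D_const.
    apply (is_derive_pow (fun y => y) 0 t 1). apply D_id. simpl; ring.
  - simpl. apply (D_plus (fun t => sum_f_R0 (fun k => legendre k x * t ^ k) N) (fun t => legendre (S N) x * (t * t ^ N))).
    auto. eapply D_eq. apply (D_mult (fun _ => legendre (S N) x) (fun t => t ^ S N)). apply D_const.
    apply (is_derive_pow (fun y => y) (S N) t 1). apply D_id. simpl; ring.
Qed.

Lemma SN_ode N t x : (1 + t ^ 2 - 2 * t * x) * dSN N t x + (t - x) * SN N t x =
  INR (S N) * t ^ N * (t * legendre N x - legendre (S N) x).
Proof.
  unfold SN, dSN. induction N.
  - simpl. rewrite leg0, leg1. ring.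
  - rewrite !tech5. simpl pred.
    replace ((1 + t ^ 2 - 2 * t * x) *
      (sum_f_R0 (fun k => legendre k x * (INR k * 1 * t ^ Init.Nat.pred k)) N +
       legendre (S N) x * (INR (S N) * 1 * t ^ N)) +
      (t - x) * (sum_f_R0 (fun k => legendre k x * t ^ k) N + legendre (S N) x * t ^ S N))
    with (((1 + t ^ 2 - 2 * t * x) *
      sum_f_R0 (fun k => legendre k x * (INR k * 1 * t ^ Init.Nat.pred k)) N +
      (t - x) * sum_f_R0 (fun k => legendre k x * t ^ k) N) +
      ((1 + t ^ 2 - 2 * t * x) * legendre (S N) x * (INR (S N) * 1 * t ^ N) + (t - x) * legendre (S N) x * t ^ S N)) by ring.
    rewrite IHN.
    assert (R := leg_rec (S N) x). simpl pred in R.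
    replace (INR (S (S N)) * t ^ S N * (t * legendre (S N) x - legendre (S (S N)) x)) with
      (INR (S (S N)) * t ^ S N * t * legendre (S N) x - t ^ S N * (INR (S (S N)) * legendre (S (S N)) x)) by ring.
    rewrite R. rewrite (S_INR (S N)). simpl. ring.
Qed.

Definition w (t x : R) := sqrt (1 + t ^ 2 - 2 * t * x).

Lemma wq_ge t x : Rabs t <= 1/2 -> -1 <= x <= 1 -> 1/4 <= 1 + t ^ 2 - 2 * t * x.
Proof.
  intros Ht Hx. assert (t * x <= Rabs t).
  { destruct (Rle_dec 0 t). rewrite Rabs_right by lra. nra. rewrite Rabs_left by lra. nra. }
  assert (0 <= Rabs t) by apply Rabs_pos.
  assert (t ^ 2 = Rabs t * Rabs t) by (pose proof (Rsqr_abs t); unfold Rsqr in *; simpl; lra).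
  nra.
Qed.

Lemma w_ge t x : Rabs t <= 1/2 -> -1 <= x <= 1 -> 1/2 <= w t x.
Proof.
  intros Ht Hx. unfold w. replace (1/2) with (sqrt ((1/2)^2)) at 1 by (apply sqrt_pow2; lra).
  apply sqrt_le_1_alt. pose proof (wq_ge t x Ht Hx). lra.
Qed.

Lemma w_sq t x : Rabs t <= 1/2 -> -1 <= x <= 1 -> w t x * w t x = 1 + t ^ 2 - 2 * t * x.
Proof. intros Ht Hx. unfold w. apply sqrt_sqrt. pose proof (wq_ge t x Ht Hx). lra. Qed.

Lemma SN_0 N x : SN N 0 x = 1.
Proof. unfold SN. induction N. simpl. rewrite leg0; ring. rewrite tech5, IHN. simpl. ring. Qed.

Definition dD N t x := INR (S N) * t ^ N * (t * legendre N x - legendre (S N) x) / w t x.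

Lemma D_derive N x t : Rabs t <= 1/2 -> -1 <= x <= 1 ->
  is_derive (fun t => SN N t x * w t x - 1) t (dD N t x).
Proof.
  intros Ht Hx. pose proof (w_ge t x Ht Hx). pose proof (w_sq t x Ht Hx). pose proof (wq_ge t x Ht Hx).
  eapply D_eq.
  apply (D_minus (fun t => SN N t x * w t x) (fun _ => 1)).
  apply (D_mult (fun t => SN N t x) (fun t => w t x)). apply SN_derive.
  unfold w. apply (is_derive_sqrt (fun t => 1 + t ^ 2 - 2 * t * x)).
  apply (D_minus (fun t => 1 + t ^ 2) (fun t => 2 * t * x)).
  apply (D_plus (fun _ => 1) (fun t => t ^ 2)). apply D_const.
  apply (is_derive_pow (fun y => y) 2 t 1). apply D_id.
  apply (D_mult (fun t => 2 * t) (fun _ => x)). apply (D_mult (fun _ => 2) (fun t => t)). apply D_const. apply D_id.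
  apply D_const. lra.
  apply D_const.
  unfold dD. rewrite <- SN_ode. fold (w t x).
  rewrite <- H0. simpl INR. simpl pred. cbv beta. field. lra.
Qed.

Definition CN (N : nat) := 4 * (INR N + 1) * (3 ^ N + 3 ^ S N).

Lemma D_bound N t x : Rabs t <= 1/2 -> -1 <= x <= 1 ->
  Rabs (SN N t x * w t x - 1) <= CN N / 2 * Rabs t ^ S N.
Proof.
  intros Ht Hx.
  destruct (MVT_gen (fun t => SN N t x * w t x - 1) 0 t (fun t => dD N t x)) as [c [Hc E]].
  - intros y Hy. apply D_derive; auto.
    assert (Rabs y <= Rabs t).
    { unfold Rmin, Rmax in Hy. destruct (Rle_dec 0 t); apply Rabs_le; rewrite ?Rabs_right, ?Rabs_left by lra; lra. }
    lra.
  - intros y Hy. apply (proj2 (continuity_pt_filterlim _ _)).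
    apply (@ex_derive_continuous R_AbsRing R_NormedModule (fun t => SN N t x * w t x - 1)). exists (dD N y x). apply (D_derive N x y); auto.
    assert (Rabs y <= Rabs t).
    { unfold Rmin, Rmax in Hy. destruct (Rle_dec 0 t); apply Rabs_le; rewrite ?Rabs_right, ?Rabs_left by lra; lra. }
    lra.
  - assert (Hct : Rabs c <= Rabs t).
    { unfold Rmin, Rmax in Hc. destruct (Rle_dec 0 t); apply Rabs_le; rewrite ?Rabs_right, ?Rabs_left by lra; lra. }
    rewrite SN_0 in E. unfold w at 2 in E. replace (1 + 0 ^ 2 - 2 * 0 * x) with 1 in E by ring.
    rewrite sqrt_1 in E. replace (SN N t x * w t x - 1) with (dD N c x * (t - 0)) by lra.
    assert (Hc2 : Rabs c <= 1/2) by lra.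
    pose proof (w_ge c x Hc2 Hx).
    unfold dD. rewrite Rminus_0_r, Rabs_mult. unfold Rdiv. rewrite Rabs_mult, Rabs_inv, (Rabs_right (w c x)) by lra.
    rewrite !Rabs_mult, (Rabs_right (INR (S N))) by (apply Rle_ge, pos_INR).
    pose proof (leg_bound N x Hx). pose proof (leg_bound (S N) x Hx).
    assert (Hi : / w c x <= 2). { replace 2 with (/ (1/2)) by field. apply Rinv_le_contravar; lra. }
    assert (Ha : Rabs (c * legendre N x - legendre (S N) x) <= 3 ^ N + 3 ^ S N).
    { unfold Rminus. eapply Rle_trans. apply Rabs_triang. rewrite Rabs_Ropp, Rabs_mult.
      assert (Rabs c * Rabs (legendre N x) <= 3 ^ N).
      { replace (3 ^ N) with (1 * 3 ^ N) by ring. apply Rmult_le_compat; try apply Rabs_pos; lra. }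
      lra. }
    assert (Hp : Rabs (c ^ N) <= Rabs t ^ N). { rewrite <- RPow_abs. apply pow_incr. split; [apply Rabs_pos|auto]. }
    unfold CN. rewrite S_INR. simpl (Rabs t ^ S N).
    assert (0 <= INR N) by apply pos_INR.
    assert (0 <= Rabs t ^ N) by (apply pow_le, Rabs_pos).
    assert (0 <= Rabs t) by apply Rabs_pos.
    assert (0 <= / w c x) by (apply Rlt_le, Rinv_0_lt_compat; lra).
    assert (0 <= Rabs (c * legendre N x - legendre (S N) x)) by apply Rabs_pos.
    assert (0 <= Rabs (c ^ N)) by apply Rabs_pos.
    set (A := Rabs (c * legendre N x - legendre (S N) x)) in *.
    set (B := 3 ^ N + 3 ^ S N) in *.
    set (P := Rabs (c ^ N)) in *. set (T := Rabs t ^ N) in *. set (iw := / w c x) in *.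
    assert (P * A <= T * B) by (apply Rmult_le_compat; lra).
    assert (P * A * iw <= T * B * 2) by (apply Rmult_le_compat; try lra; apply Rmult_le_pos; lra).
    assert (0 <= P * A * iw) by (repeat apply Rmult_le_pos; lra).
    assert (HH9 : (INR N + 1) * Rabs t * (P*A*iw) <= (INR N + 1) * Rabs t * (T*B*2)) by (apply Rmult_le_compat_l; nra). nra.
Qed.

Lemma gen_err N t x : Rabs t <= 1/2 -> -1 <= x <= 1 ->
  Rabs (SN N t x - / w t x) <= CN N * Rabs t ^ S N.
Proof.
  intros Ht Hx. pose proof (w_ge t x Ht Hx). pose proof (D_bound N t x Ht Hx).
  replace (SN N t x - / w t x) with ((SN N t x * w t x - 1) * / w t x) by (field; lra).
  rewrite Rabs_mult, (Rabs_right (/ w t x)) by (apply Rle_ge, Rlt_le, Rinv_0_lt_compat; lra).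
  assert (Hi : / w t x <= 2). { replace 2 with (/ (1/2)) by field. apply Rinv_le_contravar; lra. }
  assert (0 <= / w t x) by (apply Rlt_le, Rinv_0_lt_compat; lra).
  pose proof (Rabs_pos (SN N t x * w t x - 1)).
  assert (Rabs (SN N t x * w t x - 1) * / w t x <= (CN N / 2 * Rabs t ^ S N) * 2)
    by (apply Rmult_le_compat; lra).
  lra.
Qed.

Lemma sum_split N (a : nat -> R) t : sum_f_R0 (fun k => a k * t ^ k) (S N) =
  a 0%nat + t * sum_f_R0 (fun k => a (S k) * t ^ k) N.
Proof. rewrite decomp_sum by lia. simpl pred. rewrite scal_sum. simpl. f_equal. ring.
  apply sum_eq; intros; simpl; ring. Qed.

Lemma sum_bound1 N (b : nat -> R) t : Rabs t <= 1 ->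
  Rabs (sum_f_R0 (fun k => b k * t ^ k) N) <= sum_f_R0 (fun k => Rabs (b k)) N.
Proof.
  intros Ht. eapply Rle_trans. apply sum_f_R0_triangle. apply sum_Rle. intros n _.
  rewrite Rabs_mult, <- RPow_abs. pose proof (Rabs_pos (b n)).
  assert (Rabs t ^ n <= 1). { replace 1 with (1 ^ n) by apply pow1. apply pow_incr. split; [apply Rabs_pos|auto]. }
  assert (0 <= Rabs t ^ n) by (apply pow_le, Rabs_pos). nra.
Qed.

Lemma a0_zero (a0 C M d : R) (Q : R -> R) : 0 < d -> 0 <= M ->
  (forall t, 0 < Rabs t < d -> Rabs (a0 + t * Q t) <= C * Rabs t) ->
  (forall t, Rabs t <= 1 -> Rabs (Q t) <= M) -> a0 = 0.
Proof.
  intros Hd HM H HQ. destruct (Req_dec a0 0) as [|Hne]; auto. exfalso.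
  set (e := Rabs a0). assert (He : 0 < e) by (apply Rabs_pos_lt; auto).
  assert (HC : 0 <= Rabs C) by apply Rabs_pos.
  set (t := Rmin (d/2) (Rmin (1/2) (e / (2 * (Rabs C + M + 1))))).
  assert (Ht0 : 0 < t). { unfold t. apply Rmin_pos. lra. apply Rmin_pos. lra. apply Rdiv_lt_0_compat; lra. }
  assert (Ht1 : t <= d/2) by apply Rmin_l.
  assert (Ht2 : t <= 1/2) by (eapply Rle_trans; [apply Rmin_r| apply Rmin_l]).
  assert (Ht3 : t <= e / (2 * (Rabs C + M + 1))) by (eapply Rle_trans; [apply Rmin_r| apply Rmin_r]).
  assert (Hat : Rabs t = t) by (apply Rabs_right; lra).
  pose proof (H t ltac:(rewrite Hat; lra)). pose proof (HQ t ltac:(rewrite Hat; lra)).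
  assert (e <= Rabs (a0 + t * Q t) + Rabs (t * Q t)).
  { unfold e. replace a0 with ((a0 + t * Q t) + - (t * Q t)) at 1 by ring.
    eapply Rle_trans. apply Rabs_triang. rewrite Rabs_Ropp. lra. }
  rewrite Rabs_mult, Hat in *.
  assert (C * t <= Rabs C * t) by (apply Rmult_le_compat_r; [lra| apply Rle_abs]).
  assert (t * Rabs (Q t) <= t * M) by (apply Rmult_le_compat_l; lra).
  assert (t * (Rabs C + M + 1) <= e / 2).
  { apply (Rmult_le_reg_r (/ (Rabs C + M + 1))). apply Rinv_0_lt_compat; lra.
    replace (t * (Rabs C + M + 1) * / (Rabs C + M + 1)) with t by (field; lra).
    replace (e / 2 * / (Rabs C + M + 1)) with (e / (2 * (Rabs C + M + 1))) by (field; lra). auto. }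
  nra.
Qed.

Lemma poly_small N : forall (a : nat -> R) C d, 0 < d ->
  (forall t, 0 < Rabs t < d -> Rabs (sum_f_R0 (fun k => a k * t ^ k) N) <= C * Rabs t ^ S N) ->
  forall k, (k <= N)%nat -> a k = 0.
Proof.
  induction N; intros a C d Hd H k Hk.
  - assert (k = 0%nat) by lia. subst.
    apply (a0_zero (a 0%nat) C 0 d (fun _ => 0)); auto; try lra.
    intros t Ht. specialize (H t Ht). simpl in H. rewrite Rmult_0_r, Rplus_0_r. rewrite Rmult_1_r in *. lra.
    intros. rewrite Rabs_R0; lra.
  - assert (Ha0 : a 0%nat = 0).
    { apply (a0_zero (a 0%nat) (Rabs C) (sum_f_R0 (fun k => Rabs (a (S k))) N) (Rmin d 1)
             (fun t => sum_f_R0 (fun k => a (S k) * t ^ k) N)).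
      apply Rmin_pos; lra.
      apply cond_pos_sum. intros; apply Rabs_pos.
      - intros t Ht. assert (Ht1 : Rabs t < d) by (eapply Rlt_le_trans; [apply Ht| apply Rmin_l]).
        assert (Ht2 : Rabs t <= 1) by (left; eapply Rlt_le_trans; [apply Ht| apply Rmin_r]).
        specialize (H t (conj (proj1 Ht) Ht1)). rewrite sum_split in H.
        eapply Rle_trans. apply H.
        assert (Rabs t ^ S (S N) <= Rabs t).
        { assert (Rabs t ^ S N <= 1).
          { replace 1 with (1 ^ S N) by apply pow1. apply pow_incr. split; [apply Rabs_pos|auto]. }
          assert (Rabs t ^ S (S N) = Rabs t * Rabs t ^ S N) by reflexivity.
          pose proof (Rabs_pos t). nra. }
        assert (C <= Rabs C) by apply Rle_abs.
        assert (0 <= Rabs t ^ S (S N)) by (apply pow_le, Rabs_pos).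
        assert (C * Rabs t ^ S (S N) <= Rabs C * Rabs t ^ S (S N)) by (apply Rmult_le_compat_r; auto). assert (Rabs C * Rabs t ^ S (S N) <= Rabs C * Rabs t) by (apply Rmult_le_compat_l; [apply Rabs_pos|auto]). lra.
      - intros t Ht. apply sum_bound1; auto. }
    destruct k. auto.
    apply (IHN (fun k => a (S k)) C d Hd); [|lia].
    intros t Ht. specialize (H t Ht). rewrite sum_split, Ha0, Rplus_0_l, Rabs_mult in H.
    assert (0 < Rabs t) by lra. simpl in H.
    apply (Rmult_le_reg_l (Rabs t)); auto. simpl. nra.
Qed.

Lemma sum_eo p (g : nat -> R) : sum_f_R0 g (S (2 * p)) =
  sum_f_R0 (fun j => g (2 * j)%nat) p + sum_f_R0 (fun j => g (S (2 * j))) p.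
Proof.
  induction p. simpl. ring.
  replace (S (2 * S p)) with (S (S (S (2 * p)))) by lia.
  rewrite (tech5 g (S (S (2 * p)))), (tech5 g (S (2 * p))), IHp.
  rewrite (tech5 (fun j => g (2 * j)%nat) p), (tech5 (fun j => g (S (2 * j))) p).
  replace (2 * S p)%nat with (S (S (2 * p))) by lia. ring.
Qed.

Lemma sum_zero_tail n N (f : nat -> R) : (n <= N)%nat -> (forall k, (n < k)%nat -> f k = 0) ->
  sum_f_R0 f N = sum_f_R0 f n.
Proof. intros H Hz. induction H; auto. rewrite tech5, IHle, Hz by lia. ring. Qed.

Lemma sum_zero (f : nat -> R) N : (forall k, (k <= N)%nat -> f k = 0) -> sum_f_R0 f N = 0.
Proof. intros H. rewrite (sum_eq _ (fun _ => 0)) by auto. rewrite sum_cte. ring. Qed.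

Lemma step2_eq m (f : nat -> R) : (forall k, Nat.even (k + m) = false -> f (S k) = 0) ->
  step2_sum (delta m) (m + 1) f = sum_f_R0 (fun k => f (S k)) m.
Proof.
  intros Hz. unfold step2_sum.
  destruct (Nat.Even_or_Odd m) as [[p Hp]|[p Hp]]; subst m.
  - assert (Hd : delta (2 * p) = 1%nat) by (unfold delta; rewrite Nat.even_mul; reflexivity).
    rewrite Hd. replace (2 * p + 1 - 1)%nat with (p * 2)%nat by lia. rewrite Nat.div_mul by lia.
    assert (E : sum_f_R0 (fun k => f (S k)) (2 * p) = sum_f_R0 (fun k => f (S k)) (S (2 * p))).
    { rewrite tech5. rewrite (Hz (S (2 * p))). ring.
      rewrite Nat.even_add, Nat.even_succ, Nat.odd_mul, Nat.even_mul. reflexivity. }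
    rewrite E, sum_eo. rewrite (sum_zero (fun j => f (S (S (2 * j))))). rewrite Rplus_0_r.
    apply sum_eq. intros. f_equal.
    intros k _. apply Hz. rewrite Nat.even_add, Nat.even_succ, Nat.odd_mul, Nat.even_mul. reflexivity.
  - assert (Hd : delta (2 * p + 1) = 2%nat) by (unfold delta; rewrite Nat.even_add, Nat.even_mul; reflexivity).
    rewrite Hd.
    replace (2 * p + 1 + 1 - 2)%nat with (p * 2)%nat by lia. rewrite Nat.div_mul by lia.
    replace (2 * p + 1)%nat with (S (2 * p)) by lia.
    rewrite sum_eo. rewrite (sum_zero (fun j => f (S (2 * j)))). rewrite Rplus_0_l.
    apply sum_eq. intros. reflexivity.
    intros k _. apply Hz. replace (2 * k + (2 * p + 1))%nat with (S (2 * (k + p))) by lia.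
    rewrite Nat.even_succ, Nat.odd_mul. reflexivity.
Qed.

Lemma C_comp (f g : R -> R) : Cont f -> Cont g -> Cont (fun x => g (f x)).
Proof. intros Hf Hg x. apply (continuous_comp f g x (Hf x) (Hg (f x))). Qed.

Lemma poly_bound N (c : nat -> R) r z : Rabs z <= r ->
  Rabs (sum_f_R0 (fun k => c k * z ^ k) N) <= sum_f_R0 (fun k => Rabs (c k) * r ^ k) N.
Proof.
  intros Hz. eapply Rle_trans. apply sum_f_R0_triangle. apply sum_Rle. intros k _.
  rewrite Rabs_mult, <- RPow_abs. apply Rmult_le_compat_l. apply Rabs_pos.
  apply pow_incr. split; [apply Rabs_pos|auto].
Qed.

Lemma RInt_extR (f g : R -> R) (a b : R) : (forall x, Rmin a b < x < Rmax a b -> f x = g x) -> RInt f a b = RInt g a b.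
Proof. apply RInt_ext. Qed.

Lemma C_div_r r : Cont (fun z => z / r).
Proof. unfold Rdiv. apply C_mult. apply C_id. apply C_const. Qed.

Lemma cont_invw t r z : 0 < r -> Rabs t <= 1/2 -> -r <= z <= r ->
  @continuous R_UniformSpace R_UniformSpace (fun z => / w t (z / r)) z.
Proof.
  intros Hr Ht Hz.
  assert (Hx : -1 <= z / r <= 1).
  { split. apply (Rmult_le_reg_r r); auto. unfold Rdiv; rewrite Rmult_assoc, Rinv_l, Rmult_1_r; lra.
    apply (Rmult_le_reg_r r); auto. unfold Rdiv; rewrite Rmult_assoc, Rinv_l, Rmult_1_r; lra. }
  apply (continuous_Rinv_comp (fun z => w t (z / r))).
  - unfold w. apply (continuous_comp (fun z => 1 + t ^ 2 - 2 * t * (z / r)) sqrt).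
    + assert (Cont (fun z => 1 + t ^ 2 - 2 * t * (z / r))) by (cont; apply C_div_r).
      apply H.
    + apply continuous_sqrt.
  - pose proof (w_ge t (z / r) Ht Hx). lra.
Qed.

Theorem theorem2
  (r eps0 : R) (n : nat) (b : nat -> R) (phi0 sigma : R -> R)
  (hr : 0 < r) (heps : 0 < eps0)
  (hphi : forall s, -r < s < r ->
     - phi0 s = sum_f_R0 (fun k => b (S k) * s ^ k) n)
  (hdeg : b (S n) <> 0)
  (hbz : forall i, (n + 1 < i)%nat -> b i = 0)
  (hsig : exists c : nat -> R, forall z, -r <= z <= r ->
     sigma z = sum_f_R0 (fun k => c k * z ^ k) n)
  (heq : forall s, -r < s < r ->
     RInt (fun z => r * sigma z / sqrt (s ^ 2 + r ^ 2 - 2 * s * z)) (-r) r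
       = - 2 * eps0 * phi0 s) :
  forall m : nat,
    dipole r sigma m =
      2 * PI * eps0 * r ^ (m + 1) *
        step2_sum (delta m) (m + 1)
          (fun i => (2 * INR i - 1) * r ^ (i - 1) * Fcoef i (m + 1) * b i).
Proof.
  intros m. destruct hsig as [c Hc].
  set (sp := fun z => sum_f_R0 (fun k => c k * z ^ k) n).
  set (N := (n + m)%nat).
  set (gam := fun k => RInt (fun z => sp z * legendre k (z / r)) (-r) r).
  assert (Csp : Cont sp) by (unfold sp; cont).
  assert (CL : forall k, Cont (fun z => legendre k (z / r))).
  { intro k. apply (C_comp (fun z => z / r) (legendre k)). apply C_div_r. apply C_leg. }
  assert (Hmin : Rmin (-r) r = -r) by (apply Rmin_left; lra).
  assert (Hmax : Rmax (-r) r = r) by (apply Rmax_right; lra).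
  set (Ms := sum_f_R0 (fun k => Rabs (c k) * r ^ k) n).
  assert (HMs : forall z, -r <= z <= r -> Rabs (sp z) <= Ms).
  { intros z Hz. apply poly_bound. apply Rabs_le; lra. }
  assert (Hgam : forall k, (k <= N)%nat -> gam k = 2 * eps0 * b (S k) * r ^ k).
  { intros k Hk.
    cut (gam k - 2 * eps0 * b (S k) * r ^ k = 0). lra.
    apply (poly_small N (fun k => gam k - 2 * eps0 * b (S k) * r ^ k) ((r - - r) * (Ms * CN N)) (1/2)); auto; try lra.
    intros t Ht.
    assert (Ht2 : Rabs t <= 1/2) by lra.
    assert (Htb : -1/2 < t < 1/2) by (destruct (Rabs_def2 t (1/2)); lra).
    set (s := r * t).
    assert (Hs : -r < s < r) by (unfold s; split; nra).
    set (g := fun z => sp z * / w t (z / r)).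
    set (h := fun z => sp z * SN N t (z / r)).
    assert (Hx : forall z, -r <= z <= r -> -1 <= z / r <= 1).
    { intros z Hz. split. apply (Rmult_le_reg_r r); auto. unfold Rdiv; rewrite Rmult_assoc, Rinv_l, Rmult_1_r; lra.
      apply (Rmult_le_reg_r r); auto. unfold Rdiv; rewrite Rmult_assoc, Rinv_l, Rmult_1_r; lra. }
    assert (E1 : RInt (fun z => r * sigma z / sqrt (s ^ 2 + r ^ 2 - 2 * s * z)) (-r) r = RInt g (-r) r).
    { apply RInt_extR. rewrite Hmin, Hmax. intros z Hz. unfold g. rewrite Hc by lra. fold (sp z).
      assert (Hxz : -1 <= z / r <= 1) by (apply Hx; lra).
      pose proof (wq_ge t (z / r) Ht2 Hxz). pose proof (w_ge t (z / r) Ht2 Hxz).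
      replace (s ^ 2 + r ^ 2 - 2 * s * z) with (r ^ 2 * (1 + t ^ 2 - 2 * t * (z / r))) by (unfold s; field; lra).
      rewrite sqrt_mult by (try apply pow2_ge_0; lra). rewrite sqrt_pow2 by lra. fold (w t (z / r)).
      field. lra. }
    assert (Hcg : forall z, -r <= z <= r -> @continuous R_UniformSpace R_UniformSpace g z).
    { intros z Hz. unfold g. apply (continuous_mult sp (fun z => / w t (z / r))). apply Csp. apply cont_invw; auto. }
    assert (Hch : Cont h).
    { unfold h. apply C_mult. apply Csp. unfold SN. apply C_sum. intro j. apply C_mult. apply CL. apply C_const. }
    assert (Hex_g : ex_RInt g (-r) r).
    { apply (@ex_RInt_continuous R_CompleteNormedModule). rewrite Hmin, Hmax. auto. }
    assert (Hex_h : ex_RInt h (-r) r) by (apply Cont_ex; auto).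
    assert (Hex_hg : ex_RInt (fun z => h z - g z) (-r) r).
    { apply (@ex_RInt_continuous R_CompleteNormedModule). rewrite Hmin, Hmax. intros z Hz.
      apply (continuous_minus h g). apply Hch. auto. }
    assert (E2 : RInt h (-r) r = sum_f_R0 (fun k => gam k * t ^ k) N).
    { apply I_uniq. eapply I_ext. 2:{ eapply I_eq.
        apply (I_sum (fun j z => t ^ j * (sp z * legendre j (z / r))) _ _ (fun j => t ^ j * gam j) N).
        intros j _. apply I_scal. apply I_cont. apply C_mult. apply Csp. apply CL.
        apply sum_eq; intros; ring. }
      intro z. unfold h, SN. cbv beta. rewrite scal_sum. apply sum_eq. intros; ring. }
    assert (E3 : RInt (fun z => h z - g z) (-r) r = RInt h (-r) r - RInt g (-r) r).
    { apply (@RInt_minus R_CompleteNormedModule h g); auto. }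
    assert (Bnd : Rabs (RInt (fun z => h z - g z) (-r) r) <= (r - - r) * (Ms * (CN N * Rabs t ^ S N))).
    { apply abs_RInt_le_const. lra. auto.
      intros z Hz. unfold h, g. rewrite <- Rmult_minus_distr_l, Rabs_mult.
      apply Rmult_le_compat; try apply Rabs_pos. apply HMs; auto.
      apply gen_err; auto. }
    assert (E4 : - 2 * eps0 * phi0 s = sum_f_R0 (fun k => 2 * eps0 * b (S k) * r ^ k * t ^ k) N).
    { replace (- 2 * eps0 * phi0 s) with (2 * eps0 * (- phi0 s)) by ring. rewrite hphi by auto. rewrite scal_sum.
      rewrite (sum_zero_tail n N (fun k => 2 * eps0 * b (S k) * r ^ k * t ^ k)).
      apply sum_eq; intros; unfold s; rewrite Rpow_mult_distr; ring. unfold N; lia.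
      intros j Hj. rewrite hbz by lia. ring. }
    pose proof (heq s Hs) as HE. rewrite E1 in HE.
    rewrite (sum_eq _ (fun k => gam k * t ^ k - 2 * eps0 * b (S k) * r ^ k * t ^ k)) by (intros; ring).
    rewrite minus_sum, <- E2, <- E4, <- HE, <- E3.
    eapply Rle_trans. apply Bnd. right. ring. }
  assert (Hexp : RInt (fun z => z ^ m * sigma z) (-r) r =
     r ^ m * sum_f_R0 (fun k => (2 * INR k + 1) / 2 * Fcoef (S k) (S m) * gam k) m).
  { rewrite (RInt_extR _ (fun z => z ^ m * sp z)).
    2:{ rewrite Hmin, Hmax. intros z Hz. rewrite Hc by lra. reflexivity. }
    apply I_uniq. eapply I_ext. 2:{ eapply I_eq.
      apply (I_scal (fun z => sum_f_R0 (fun k => (2 * INR k + 1) / 2 * Fcoef (S k) (S m) * (sp z * legendre k (z / r))) m) _ _ (r ^ m)).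
      apply (I_sum (fun k z => (2 * INR k + 1) / 2 * Fcoef (S k) (S m) * (sp z * legendre k (z / r))) _ _
        (fun k => (2 * INR k + 1) / 2 * Fcoef (S k) (S m) * gam k) m).
      intros k _. apply I_scal. apply I_cont. apply C_mult; auto. reflexivity. }
    intro z. cbv beta.
    replace (z ^ m) with (r ^ m * (z / r) ^ m) by (rewrite <- Rpow_mult_distr; f_equal; field; lra).
    rewrite (expand m (z / r)). rewrite !Rmult_assoc. f_equal.
    rewrite Rmult_comm, scal_sum. apply sum_eq. intros; ring. }
  unfold dipole. rewrite Hexp. rewrite step2_eq.
  2:{ intros k Hk. rewrite Nat.add_1_r, Fcoef_odd by auto. ring. }
  rewrite (sum_eq (fun k => (2 * INR k + 1) / 2 * Fcoef (S k) (S m) * gam k)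
     (fun k => (2 * INR k + 1) / 2 * Fcoef (S k) (S m) * (2 * eps0 * b (S k) * r ^ k))).
  2:{ intros k Hk. rewrite Hgam by (unfold N; lia). reflexivity. }
  rewrite !scal_sum. apply sum_eq. intros k _.
  replace (S k - 1)%nat with k by lia. rewrite Nat.add_1_r, S_INR. simpl. field.
Qed.
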